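(* Let $f:\mathbb{R}^n\to\mathbb{R}$ be differentiable, $\gamma\in\mathbb{R}$, $\mathcal{X}=\{x:\sum_m x_m=\gamma\}$, $L_1,\dots,L_n>0$, and $\|d\|_L=\sum_m\sqrt{L_m}|d_m|$. Assume there is $L_L>0$ with $f(x+d)\le f(x)+\nabla f(x)^\top d+\frac{L_L}{2}\|d\|_L^2$ for all $x\in\mathcal{X}$ and all $d$ with $\sum_m d_m=0$. Let $f^*=\inf_{\mathcal{X}}f$ and assume there is $\mu_L>0$ with $\frac12\mathcal{D}_L(x,L_L)\ge\mu_L(f(x)-f^* )$ for all $x\in\mathcal{X}$, where $\mathcal{D}_L(x,L)=-2L\min_{d:\sum_m d_m=0}\{\nabla f(x)^\top d+\frac{L}{2}\|d\|_L^2\}$. Let $x^0\in\mathcal{X}$ and define $x^{k+1}=x^k+d^k$, where $(i_k,j_k)$ maximizes $\frac{\nabla_if(x^k)-\nabla_jf(x^k)}{\sqrt{L_i}+\sqrt{L_j}}$ over ordered pairs $i\neq j$, $\delta^k=\frac{\nabla_{i_k}f(x^k)-\nabla_{j_k}f(x^k)}{L_L(\sqrt{L_{i_k}}+\sqrt{L_{j_k}})^2}$, $d^k_{i_k}=-\delta^k$, $d^k_{j_k}=\delta^k$ and $d^k_m=0$ otherwise. Then for all $k\ge0$, \[ f(x^k)-f^*\le\Big(1-\frac{\mu_L}{L_L}\Big)^k\big(f(x^0)-f^*\big). \] *)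

(* Defs.v *)
(* Vectors of R^n are row vectors 'rV[R]_n,
   the m-th coordinate of x is x ord0 m. *)
From HB Require Import structures.
From mathcomp Require Import all_boot all_order all_algebra.
From mathcomp Require Import all_classical all_reals all_analysis.
Import Order.TTheory GRing.Theory Num.Theory numFieldNormedType.Exports.

Set Implicit Arguments.
Unset Strict Implicit.
Unset Printing Implicit Defensive.

Local Open Scope classical_set_scope.
Local Open Scope ring_scope.

Section Defs.
Context {R : realType} {n : nat}.

Definition vsum (x : 'rV[R]_n) : R := \sum_(m < n) x ord0 m.

Definition feasible (gamma : R) : set 'rV[R]_n := [set x | vsum x = gamma].

Definition gradi (f : 'rV[R]_n -> R) (x : 'rV[R]_n) (i : 'I_n) : R :=
  'd f x (delta_mx ord0 i).

Definition normL (Lw : 'I_n -> R) (d : 'rV[R]_n) : R :=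
  \sum_(m < n) Num.sqrt (Lw m) * `|d ord0 m|.

Definition DL (f : 'rV[R]_n -> R) (Lw : 'I_n -> R) (x : 'rV[R]_n) (LL : R) : R :=
  - 2 * LL * inf [set ('d f x d + LL / 2 * normL Lw d ^+ 2) | d in [set d | vsum d = 0]].

Definition fstar (f : 'rV[R]_n -> R) (gamma : R) : \bar R :=
  ereal_inf [set (f y)%:E | y in feasible gamma].

Definition pair_ratio (f : 'rV[R]_n -> R) (Lw : 'I_n -> R) (x : 'rV[R]_n) (i j : 'I_n) : R :=
  (gradi f x i - gradi f x j) / (Num.sqrt (Lw i) + Num.sqrt (Lw j)).

Definition step_dir (f : 'rV[R]_n -> R) (Lw : 'I_n -> R) (LL : R) (x : 'rV[R]_n)
  (i j : 'I_n) : 'rV[R]_n :=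
  let delta := (gradi f x i - gradi f x j) /
               (LL * (Num.sqrt (Lw i) + Num.sqrt (Lw j)) ^+ 2) in
  \row_m (if m == i then - delta else if m == j then delta else 0).

End Defs.

(* Main.v *)
Require Import Defs.
From HB Require Import structures.
From mathcomp Require Import all_boot all_order all_algebra.
From mathcomp Require Import all_classical all_reals all_analysis.
From mathcomp Require Import ring lra.
Import Order.TTheory GRing.Theory Num.Theory numFieldNormedType.Exports.
Local Open Scope classical_set_scope.
Local Open Scope ring_scope.

Section Aux.
Context {R : realType} {n : nat}.
Implicit Types (f : 'rV[R]_n -> R) (Lw : 'I_n -> R).

Lemma dsum f x (d : 'rV[R]_n) :
  'd f x d = \sum_(m < n) d ord0 m * gradi f x m.
Proof.
rewrite [in LHS](row_sum_delta d) linear_sum; apply: eq_bigr => m _.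
by rewrite linearZ.
Qed.

Lemma vsumD (x d : 'rV[R]_n) : vsum (x + d) = vsum x + vsum d.
Proof. by rewrite /vsum -big_split; apply: eq_bigr => m _; rewrite mxE. Qed.

Lemma lower_bound f Lw x (i j : 'I_n) :
  (forall m, 0 < Lw m) -> i != j ->
  (forall p q : 'I_n, p != q -> pair_ratio f Lw x p q <= pair_ratio f Lw x i j) ->
  0 <= pair_ratio f Lw x i j /\
  forall d : 'rV[R]_n, vsum d = 0 ->
    - (pair_ratio f Lw x i j * normL Lw d) <= 'd f x d.
Proof.
move=> Lpos ij Hmax.
set r := pair_ratio f Lw x i j.
set g := gradi f x.
have sq0 m : 0 < Num.sqrt (Lw m) by rewrite sqrtr_gt0.
have r0 : 0 <= r.
  have e : pair_ratio f Lw x j i = - r.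
    by rewrite /r /pair_ratio (addrC (Num.sqrt (Lw j))) -mulNr opprB.
  have := Hmax j i; rewrite eq_sym ij e => /(_ isT) H.
  rewrite -/r in H; lra.
split=> // d d0.
have Hpq p q : g p - r * Num.sqrt (Lw p) <= g q + r * Num.sqrt (Lw q).
  have := sq0 p; have := sq0 q.
  case: (eqVneq p q) => [->|pq] sp sq; first nra.
  have := Hmax p q pq; rewrite -/r [pair_ratio f Lw x p q]/pair_ratio -/g.
  rewrite ler_pdivrMr; last by rewrite addr_gt0.
  lra.
set t := \big[Num.max/(g i - r * Num.sqrt (Lw i))]_p (g p - r * Num.sqrt (Lw p)).
have lt p : g p - r * Num.sqrt (Lw p) <= t by apply: le_bigmax.
have tl q : t <= g q + r * Num.sqrt (Lw q).
  by apply: bigmax_le => // p _; apply: Hpq.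
rewrite dsum.
have -> : \sum_(m < n) d ord0 m * g m = \sum_(m < n) d ord0 m * (g m - t).
  have : \sum_(m < n) d ord0 m * t = 0 by rewrite -mulr_suml -/(vsum d) d0 mul0r.
  rewrite [X in _ -> _ = X](eq_bigr (fun m => d ord0 m * g m - d ord0 m * t)).
    by rewrite sumrB => ->; rewrite subr0.
  by move=> m _; rewrite mulrBr.
rewrite /normL mulr_sumr -sumrN; apply: ler_sum => m _.
have := lt m; have := tl m; have := sq0 m.
case: (lerP 0 (d ord0 m)) => dm.
  rewrite ger0_norm //; nra.
rewrite ltr0_norm //; nra.
Qed.

Lemma step_sum f Lw LL x (i j : 'I_n) (F : 'I_n -> R -> R) :
  i != j -> (forall m, F m 0 = 0) ->
  \sum_(m < n) F m (step_dir f Lw LL x i j ord0 m) =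
  F i (- ((gradi f x i - gradi f x j) /
               (LL * (Num.sqrt (Lw i) + Num.sqrt (Lw j)) ^+ 2))) +
  F j ((gradi f x i - gradi f x j) /
               (LL * (Num.sqrt (Lw i) + Num.sqrt (Lw j)) ^+ 2)).
Proof.
move=> ij F0; rewrite /step_dir.
rewrite (bigD1 i) //= (bigD1 j) ?(eq_sym j) //= !mxE eqxx.
rewrite eq_sym (negbTE ij) eqxx big1 ?addr0 // => m /andP[mi mj].
by rewrite mxE (negbTE mi) (negbTE mj) F0.
Qed.

Lemma descent f Lw LL y (i j : 'I_n) :
  (forall m, 0 < Lw m) -> 0 < LL -> i != j -> 0 <= pair_ratio f Lw y i j ->
  (forall d : 'rV[R]_n, vsum d = 0 ->
     f (y + d) <= f y + 'd f y d + LL / 2 * normL Lw d ^+ 2) ->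
  vsum (step_dir f Lw LL y i j) = 0 /\
  f (y + step_dir f Lw LL y i j) <= f y - pair_ratio f Lw y i j ^+ 2 / (2 * LL).
Proof.
move=> Lpos LL0 ij r0 Hs.
have vs : vsum (step_dir f Lw LL y i j) = 0.
  rewrite /vsum (step_sum _ _ _ _ _ _ (fun _ v => v)) //; lra.
split=> //.
apply: le_trans (Hs _ vs) _.
rewrite dsum (step_sum _ _ _ _ _ _ (fun m v => v * gradi f y m)) //; last by move=> m; rewrite mul0r.
rewrite /normL (step_sum _ _ _ _ _ _ (fun m v => Num.sqrt (Lw m) * `|v|)) //; last by move=> m; rewrite normr0 mulr0.
move: r0; rewrite /pair_ratio.
set a := gradi f y i - gradi f y j.
set s := Num.sqrt (Lw i) + Num.sqrt (Lw j).
have s0 : 0 < s by rewrite addr_gt0 // sqrtr_gt0.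
move=> r0.
have a0 : 0 <= a by move: r0; rewrite pmulr_lge0 // invr_gt0.
have d0 : 0 <= a / (LL * s ^+ 2).
  by rewrite divr_ge0 // mulr_ge0 ?sqr_ge0 // ltW.
rewrite normrN ger0_norm // -mulrDl -/s.
have -> : - (a / (LL * s ^+ 2)) * gradi f y i + a / (LL * s ^+ 2) * gradi f y j
   = - (a / (LL * s ^+ 2)) * a by rewrite /a; ring.
rewrite le_eqVlt; apply/orP; left; apply/eqP.
have sn : s != 0 by rewrite lt0r_neq0.
have ln : LL != 0 by rewrite lt0r_neq0.
by field; rewrite sn ln.
Qed.

End Aux.

Theorem mainTheorem5 (R : realType) (n : nat) (f : 'rV[R]_n -> R) (gamma : R)
  (Lw : 'I_n -> R) (LL muL : R) (x : nat -> 'rV[R]_n) (i j : nat -> 'I_n) :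
  (forall y : 'rV[R]_n, differentiable f y) ->
  (forall m, 0 < Lw m) ->
  0 < LL ->
  (forall y d : 'rV[R]_n, feasible gamma y -> vsum d = 0 ->
     f (y + d) <= f y + 'd f y d + LL / 2 * normL Lw d ^+ 2) ->
  0 < muL ->
  (forall y : 'rV[R]_n, feasible gamma y ->
     (muL%:E * ((f y)%:E - fstar f gamma) <= (DL f Lw y LL / 2)%:E)%E) ->
  feasible gamma (x 0%N) ->
  (forall k, i k != j k /\
     (forall p q : 'I_n, p != q -> pair_ratio f Lw (x k) p q <= pair_ratio f Lw (x k) (i k) (j k))) ->
  (forall k, x k.+1 = x k + step_dir f Lw LL (x k) (i k) (j k)) ->
  forall k : nat,
    ((f (x k))%:E - fstar f gamma <=
       ((1 - muL / LL) ^+ k)%:E * ((f (x 0%N))%:E - fstar f gamma))%E.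
Proof.
move=> _ Lpos LL0 Hsm mu0 HPL x0f Hsel Hrec.
set r := fun k => pair_ratio f Lw (x k) (i k) (j k).
have LB k := lower_bound f Lw (x k) (i k) (j k) Lpos (Hsel k).1 (Hsel k).2.
have feas k : feasible gamma (x k).
  elim: k => // k IH; rewrite Hrec.
  have [vs _] := descent f Lw LL (x k) (i k) (j k) Lpos LL0 (Hsel k).1 (LB k).1 (fun d => Hsm _ d IH).
  by move: IH; rewrite /feasible /= vsumD vs addr0.
have desc k : f (x k.+1) <= f (x k) - r k ^+ 2 / (2 * LL).
  have [_ H] := descent f Lw LL (x k) (i k) (j k) Lpos LL0 (Hsel k).1 (LB k).1 (fun d => Hsm _ d (feas k)).
  by rewrite Hrec.
have DLb k : DL f Lw (x k) LL <= r k ^+ 2.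
  have [r0 Hl] := LB k; rewrite -/(r k) in r0 Hl.
  rewrite /DL.
  set S := [set _ | _ in _].
  have hinf : - (r k ^+ 2) / (2 * LL) <= inf S.
    apply: lb_le_inf.
      exists ('d f (x k) 0 + LL / 2 * normL Lw 0 ^+ 2); exists 0 => //.
      by rewrite /= /vsum big1 // => m _; rewrite mxE.
    move=> z [d /= d0 <-].
    have := Hl d d0.
    have N0 : 0 <= normL Lw d.
      by apply: sumr_ge0 => m _; rewrite mulr_ge0 ?sqrtr_ge0.
    move=> Hd; set d2 := 'd f (x k) d.
    rewrite ler_pdivrMr; last by rewrite mulr_gt0.
    have h1 : 0 <= LL * (d2 + r k * normL Lw d) by apply: mulr_ge0; [exact: ltW | lra].
    have := sqr_ge0 (LL * normL Lw d - r k); nra.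
  have e2 : -2 * LL * (- (r k ^+ 2) / (2 * LL)) = r k ^+ 2.
    by field; rewrite lt0r_neq0.
  nra.
have lbf y : feasible gamma y -> (fstar f gamma <= (f y)%:E)%E.
  by move=> fy; apply: ereal_inf_lbound; exists y.
case E: (fstar f gamma) => [fs| |].
- set e := fun k => f (x k) - fs.
  have e0 k : 0 <= e k by have := lbf _ (feas k); rewrite E lee_fin /e subr_ge0.
  have hmu k : muL * e k <= r k ^+ 2 / 2.
    have := HPL _ (feas k); rewrite E -EFinB -EFinM lee_fin => H.
    have := DLb k; rewrite /e; lra.
  have dec k : e k.+1 <= e k - r k ^+ 2 / (2 * LL).
    by have := desc k; rewrite /e; lra.
  set c := 1 - muL / LL.
  have step k : e k.+1 <= c * e k.
    have h1 : (muL * e k) / LL <= (r k ^+ 2 / 2) / LL.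
      by rewrite ler_pM2r // invr_gt0.
    have h2 : (r k ^+ 2 / 2) / LL = r k ^+ 2 / (2 * LL).
      by field; rewrite lt0r_neq0.
    have h3 : c * e k = e k - (muL * e k) / LL by rewrite /c; ring.
    have := dec k; lra.
  have mono k : e k.+1 <= e k.
    have := dec k; have : 0 <= r k ^+ 2 / (2 * LL).
      by rewrite divr_ge0 ?sqr_ge0 // mulr_ge0 // ltW.
    lra.
  move=> k; rewrite -!EFinB -EFinM lee_fin -/(e k) -/(e 0%N).
  case: (lerP 0 c) => c0.
    elim: k => [|k IH]; first by rewrite expr0 mul1r.
    apply: le_trans (step k) _.
    by rewrite exprS -mulrA ler_wpM2l.
  have ez : e 0%N = 0.
    have := step 0%N; have := e0 1%N; have := e0 0%N; nra.
  rewrite ez mulr0.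
  elim: k => [|k IH]; first by rewrite ez.
  exact: le_trans (mono k) IH.
- by have := lbf _ x0f; rewrite E leye_eq.
- have := HPL _ x0f; rewrite E /= mulry gtr0_sg // mul1e leye_eq.
  by [].
Qed.
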